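(* Let $D=\operatorname{diag}(d_1,\dots,d_n)$ with $d_i>0$, and let $L\in\mathbb{R}^{N\times N}$ be symmetric with nonpositive off-diagonal entries and $L\mathbf{1}=0$. Then for every $1\le p\le\infty$, $M^+_p[-L\otimes D]=0$.
   Context: $M^+_p[f]$ denotes the strong least upper bound logarithmic Lipschitz constant on $\mathbb{R}^{nN}$ induced by the standard $p$-norm: $M^+_p[f]=\sup_{u\neq v}\lim_{h\to0^+}\frac1h\left(\frac{\|u-v+h(f(u)-f(v))\|_p}{\|u-v\|_p}-1\right)$; here the linear map $u\mapsto-(L\otimes D)u$. $\otimes$ is the Kronecker product and $\mathbf{1}=(1,\dots,1)^T$. *)

(* Defs.v *)
From HB Require Import structures.
From mathcomp Require Import all_boot all_order all_algebra.
From mathcomp Require Import all_classical all_reals all_analysis.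
From mathcomp Require Import mxtens.
Set Implicit Arguments. Unset Strict Implicit. Unset Printing Implicit Defensive.
Import Order.TTheory GRing.Theory Num.Theory.
Import numFieldNormedType.Exports.
Local Open Scope ring_scope.
Local Open Scope classical_set_scope.

Definition pnorm (R : realType) (p : \bar R) (k : nat) (x : 'cV[R]_k) : R :=
  match p with
  | +oo%E => \big[Num.max/0]_(i < k) `|x i 0|
  | (r%:E)%E => (\sum_(i < k) `|x i 0| `^ r) `^ (r^-1)
  | -oo%E => 0
  end.

Definition logLipM (R : realType) (p : \bar R) (k : nat)
    (f : 'cV[R]_k -> 'cV[R]_k) : \bar R :=
  ereal_sup [set x : \bar R | exists u v : 'cV[R]_k, u != v /\
     x = (lim ((fun h : R =>
            (pnorm p (u - v + h *: (f u - f v)) / pnorm p (u - v) - 1) / h)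
            @ 0^'+))%:E].

(* Main.v *)
Require Import Defs.
From HB Require Import structures.
From mathcomp Require Import all_boot all_order all_algebra.
From mathcomp Require Import all_classical all_reals all_analysis.
From mathcomp Require Import mxtens.
Import Order.TTheory GRing.Theory Num.Theory.
Import numFieldNormedType.Exports.
Local Open Scope ring_scope.
Section S.
Variable R : realType.
Lemma jensen_powR (k : nat) (r : R) (a x : 'I_k -> R) : 1 <= r ->
  (forall j, 0 <= a j) -> (forall j, 0 <= x j) -> \sum_j a j = 1 ->
  (\sum_j a j * x j) `^ r <= \sum_j a j * x j `^ r.
Proof.
move=> r1; elim: k a x => [|k IH] a x a0 x0; first by rewrite big_ord0 => /eqP; rewrite eq_sym oner_eq0.
rewrite !big_ord_recr /=.
set s := \sum_(j < k) a (widen_ord (leqnSn k) j) => hs.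
have s0 : 0 <= s by rewrite sumr_ge0.
have [s_eq0|s_gt0] := eqVneq s 0.
  have az : forall j : 'I_k, a (widen_ord (leqnSn k) j) = 0.
    move=> j; move/eqP: s_eq0; rewrite psumr_eq0 => [/allP H|j' _]; last exact: a0.
    by apply/eqP; apply: H; rewrite mem_index_enum.
  rewrite !big1 ?add0r => [|j _|j _]; rewrite ?az ?mul0r //.
  move: hs; rewrite s_eq0 add0r => ->; rewrite !mul1r //.
have sp : 0 < s by rewrite lt_def s_gt0.
have c : a ord_max = 1 - s by rewrite -hs addrC addrK.
have sle1 : s <= 1 by rewrite -hs lerDl.
pose a' j := a (widen_ord (leqnSn k) j) / s.
have IH' := IH a' (fun j => x (widen_ord (leqnSn k) j)).
have := IH' (fun j => divr_ge0 (a0 _) s0) (fun j => x0 _).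
rewrite -mulr_suml mulfV // => /(_ erefl).
set y := \sum_(i < k) a' i * x (widen_ord (leqnSn k) i).
set z := \sum_(i < k) a' i * x (widen_ord (leqnSn k) i) `^ r => Hyz.
have ey : \sum_(i < k) a (widen_ord (leqnSn k) i) * x (widen_ord (leqnSn k) i) = s * y.
  by rewrite /y mulr_sumr; apply: eq_bigr => i _; rewrite /a' mulrA mulrCA mulfV ?mulr1 // gt_eqF.
have ez : \sum_(i < k) a (widen_ord (leqnSn k) i) * x (widen_ord (leqnSn k) i) `^ r = s * z.
  by rewrite /z mulr_sumr; apply: eq_bigr => i _; rewrite /a' mulrA mulrCA mulfV ?mulr1 // gt_eqF.
rewrite ey ez c.
have y0 : 0 <= y by rewrite sumr_ge0 // => i _; rewrite mulr_ge0 // divr_ge0.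
have := @convex_powR R r r1 (Itv01 s0 sle1) y (x ord_max).
rewrite !inE /= !in_itv /= !andbT => /(_ y0 (x0 _)).
rewrite !convRE /= => H; apply: (le_trans H).
by rewrite lerD2r ler_wpM2l.
Qed.
Lemma row_bound k (P : 'M[R]_k) (w : 'cV[R]_k) i :
  (forall i j, 0 <= P i j) -> `|(P *m w) i 0| <= \sum_j P i j * `|w j 0|.
Proof.
move=> P0; rewrite mxE; apply: (le_trans (ler_norm_sum _ _ _)).
by apply: ler_sum => j _; rewrite normrM ger0_norm.
Qed.

Lemma contr_r k (P : 'M[R]_k) (r : R) (w : 'cV[R]_k) : 1 <= r ->
  (forall i j, 0 <= P i j) -> (forall i, \sum_j P i j = 1) ->
  (forall j, \sum_i P i j = 1) -> pnorm r%:E (P *m w) <= pnorm r%:E w.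
Proof.
move=> r1 P0 Pr Pc; rewrite /pnorm.
have r0 : 0 <= r by apply: le_trans r1.
apply: ge0_ler_powR; rewrite ?invr_ge0 // ?nnegrE; try by apply: sumr_ge0 => i _; rewrite powR_ge0.
apply: (@le_trans _ _ (\sum_i \sum_j P i j * `|w j 0| `^ r)).
  apply: ler_sum => i _.
  apply: (@le_trans _ _ ((\sum_j P i j * `|w j 0|) `^ r)).
    apply: ge0_ler_powR; rewrite ?nnegrE ?row_bound //.
    by apply: sumr_ge0 => j _; rewrite mulr_ge0.
  by apply: jensen_powR.
rewrite exchange_big /=; apply: ler_sum => j _.
by rewrite -mulr_suml Pc mul1r.
Qed.

Lemma contr_oo k (P : 'M[R]_k) (w : 'cV[R]_k) :
  (forall i j, 0 <= P i j) -> (forall i, \sum_j P i j = 1) ->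
  pnorm +oo%E (P *m w) <= pnorm +oo%E w.
Proof.
move=> P0 Pr; rewrite /pnorm.
set m := \big[Num.max/0]_(i < k) `|w i 0|.
apply: bigmax_le => [|i _]; first by rewrite /m bigmax_idl le_max lexx.
apply: le_trans (row_bound _ P w i P0) _.
apply: (@le_trans _ _ (\sum_j P i j * m)); last by rewrite -mulr_suml Pr mul1r.
apply: ler_sum => j _; apply: ler_wpM2l => //.
exact: (le_bigmax _ (fun j => `|w j 0|) j).
Qed.
Lemma rowsumE k (P : 'M[R]_k) i : \sum_j P i j = (P *m (const_mx 1 : 'cV[R]_k)) i 0.
Proof. by rewrite mxE; apply: eq_bigr => j _; rewrite mxE mulr1. Qed.

Lemma stoch k (M : 'M[R]_k) : M^T = M -> M *m (const_mx 1 : 'cV[R]_k) = 0 ->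
  (forall i j, i != j -> M i j <= 0) ->
  exists2 h0, 0 < h0 & forall h, 0 < h -> h <= h0 ->
   let P := 1%:M - h *: M in
   [/\ forall i j, 0 <= P i j, forall i, \sum_j P i j = 1 & forall j, \sum_i P i j = 1].
Proof.
move=> MT M1 Moff.
set S := \sum_i `|M i i|.
have S0 : 0 <= S by rewrite sumr_ge0.
exists (1 + S)^-1; first by rewrite invr_gt0 ltr_wpDr.
move=> h h0 hle P.
have rows : forall i, \sum_j P i j = 1.
  move=> i; rewrite rowsumE /P mulmxBl mul1mx -scalemxAl M1 scaler0 subr0 mxE //.
split => //.
- move=> i j; rewrite /P !mxE.
  have [->|ij] := eqVneq i j.
    rewrite mulr1n subr_ge0.
    apply: (le_trans (ler_norm _)); rewrite normrM (gtr0_norm h0).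
    apply: (@le_trans _ _ ((1 + S)^-1 * (1 + S))); last by rewrite mulVf // gt_eqF // ltr_wpDr.
    apply: ler_pM => //; first exact: ltW.
    apply: ler_wpDl => //; rewrite /S (bigD1 j) //= lerDl sumr_ge0 //.
  rewrite mulr0n sub0r oppr_ge0 mulr_ge0_le0 //; [exact: ltW | exact: Moff].
- move=> j; have <- := rows j; apply: eq_bigr => i _.
  by rewrite /P !mxE -{1}MT mxE eq_sym.
Qed.
End S.

Lemma pnorm_gt0 (R : realType) (p : \bar R) k (w : 'cV[R]_k) : (1%:E <= p)%E ->
  w != 0 -> 0 < pnorm p w.
Proof.
move=> p1 wnz.
have [i wi] : exists i, w i 0 != 0.
  apply/not_existsP => H; move/negP: wnz; apply; apply/eqP/matrixP => i j.
  rewrite ord1 mxE; apply/eqP/negPn/negP => Hi; exact: (H i).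
have wp : 0 < `|w i 0| by rewrite normr_gt0.
case: p p1 => [r| |] //= p1.
- apply: powR_gt0; apply: (lt_le_trans (powR_gt0 r wp)).
  by rewrite (bigD1 i) //= lerDl sumr_ge0 // => j _; rewrite powR_ge0.
- apply: (lt_le_trans wp); exact: (le_bigmax _ (fun j => `|w j 0|) i).
Qed.

Lemma contr_p (R : realType) (p : \bar R) k (P : 'M[R]_k) (w : 'cV[R]_k) :
  (1%:E <= p)%E ->
  (forall i j, 0 <= P i j) -> (forall i, \sum_j P i j = 1) ->
  (forall j, \sum_i P i j = 1) -> pnorm p (P *m w) <= pnorm p w.
Proof.
case: p => [r| |] //= p1 P0 Pr Pc.
- by apply: contr_r; rewrite -?lee_fin.
- exact: contr_oo.
Qed.

Theorem proposition4 (R : realType) (n N : nat) (d : 'rV[R]_n)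
    (L : 'M[R]_N) (p : \bar R) :
  (0 < n)%N -> (0 < N)%N ->
  (forall i, 0 < d 0 i) ->
  L^T = L ->
  (forall i j : 'I_N, i != j -> L i j <= 0) ->
  L *m const_mx 1 = 0 :> 'cV[R]_N ->
  (1%:E <= p)%E ->
  logLipM p (fun u : 'cV[R]_(N * n) => - ((L *t diag_mx d) *m u)) = 0%E.
Proof.
move=> n0 N0 d0 LT Loff L1 p1.
set A := L *t diag_mx d.
have AT : A^T = A by rewrite /A trmx_tens LT tr_diag_mx.
have A1 : A *m (const_mx 1 : 'cV[R]_(N * n)) = 0.
  have -> : (const_mx 1 : 'cV[R]_(N*n)) = (const_mx 1 : 'cV[R]_N) *t (const_mx 1 : 'cV[R]_n).
    by apply/matrixP => i j; rewrite !mxE mulr1.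
  have := tensmx_mul L (diag_mx d) (const_mx 1 : 'cV[R]_N) (const_mx 1 : 'cV[R]_n).
  by rewrite L1 tens0mx.
have Aoff : forall i j, i != j -> A i j <= 0.
  move=> i j; case: (mxtens_indexP i) => i1 i2; case: (mxtens_indexP j) => j1 j2 ij.
  rewrite /A tensmxE mxE.
  have [e1|ne1] := eqVneq i1 j1.
    have [e2|ne2] := eqVneq i2 j2; first by move: ij; rewrite e1 e2 eqxx.
    by rewrite mulr0n mulr0.
  by rewrite mulr_le0_ge0 ?Loff // mulrn_wge0 // ltW.
have [h0 h0p HP] := @stoch R _ A AT A1 Aoff.
have key : forall (u v : 'cV[R]_(N * n)) h,
    u - v + h *: (- (A *m u) - - (A *m v)) = (1%:M - h *: A) *m (u - v).
  move=> u v h; rewrite mulmxBl mul1mx -scalemxAl mulmxBr.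
  by rewrite opprK; congr (_ + _); rewrite -scalerN opprB addrC.
rewrite /logLipM; apply: le_anti; apply/andP; split.
- apply: ge_ereal_sup => x [u [v [uv ->]]]; rewrite lee_fin.
  set F := fun h : R => _.
  have [cv|ncv] := pselect (cvg (F @ 0^'+)%classic); last by rewrite dvgP.
  apply: limr_le => //.
  have wp : 0 < pnorm p (u - v) by apply: pnorm_gt0 => //; rewrite subr_eq0.
  near=> h.
  have hp : 0 < h by near: h; exact: nbhs_right_gt.
  have hle : h <= h0 by near: h; exact: nbhs_right_le.
  have [Pa Pb Pc] := HP h hp hle.
  rewrite /F key pmulr_lle0 ?invr_gt0 // subr_le0 ler_pdivrMr // mul1r.
  exact: contr_p.
- apply: ereal_sup_ubound.
  exists (const_mx 1), 0; split.
    have Nn : (0 < N * n)%N by rewrite muln_gt0 N0 n0.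
    apply/negP => /eqP/matrixP/(_ (Ordinal Nn) 0); rewrite !mxE => /eqP.
    by rewrite oner_eq0.
  have cp : 0 < pnorm p (const_mx 1 : 'cV[R]_(N * n)).
    apply: pnorm_gt0 => //.
    have Nn : (0 < N * n)%N by rewrite muln_gt0 N0 n0.
    apply/negP => /eqP/matrixP/(_ (Ordinal Nn) 0); rewrite !mxE => /eqP.
    by rewrite oner_eq0.
  rewrite (_ : (fun h : R => _) = fun _ => 0); last first.
    apply/funext => h; rewrite A1 mulmx0 !(oppr0, subr0, addr0, scaler0).
    by rewrite divff ?gt_eqF // subrr mul0r.
  by rewrite lim_cst.
Unshelve. all: by end_near.
Qed.
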